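(* If $S$ is a DRC-semigroup, then $$\mu_S=\{(a,b)\in S\times S:\Theta_a=\Theta_b\text{ and }\Delta_a=\Delta_b\}=\{(a,b)\in S\times S:\vartheta_a=\vartheta_b\text{ and }\vartheta'_a=\vartheta'_b\}.$$
   Context: A DRC-semigroup is $(S,\cdot,D,R)$, $(S,\cdot)$ a semigroup, $D,R:S\to S$ with, for all $a,b$: $D(a)a=a$, $aR(a)=a$; $D(ab)=D(aD(b))$, $R(ab)=R(R(a)b)$; $D(ab)=D(a)D(ab)D(a)$, $R(ab)=R(b)R(ab)R(b)$; $R(D(a))=D(a)$, $D(R(a))=R(a)$. Let $P=\{D(a):a\in S\}$ (projections), partially ordered by $p\le q\iff p=pq=qp$. For $a\in S$ define maps (written on the right): $\Theta_a,\Delta_a:P\to P$ by $p\Theta_a=R(pa)$, $p\Delta_a=D(ap)$; $\vartheta_a:\{p\in P:p\le D(a)\}\to P$, $p\vartheta_a=R(pa)$; $\vartheta'_a:\{p\in P:p\le R(a)\}\to P$, $p\vartheta'_a=D(ap)$. Equality of maps includes equality of domains. A congruence on $S$ is a semigroup congruence $\sigma$ with $a\,\sigma\,b\Rightarrow D(a)\,\sigma\,D(b)$ and $R(a)\,\sigma\,R(b)$; it is projection-separating if $p\,\sigma\,q\Rightarrow p=q$ for $p,q\in P$. $\mu_S$ is the maximum projection-separating congruence on $S$. *)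

(* Defs.v *)
Record DRCSemigroup : Type := {
  carrier :> Type;
  mul : carrier -> carrier -> carrier;
  Dop : carrier -> carrier;
  Rop : carrier -> carrier;
  mul_assoc : forall a b c, mul (mul a b) c = mul a (mul b c);
  D_left_id : forall a, mul (Dop a) a = a;
  R_right_id : forall a, mul a (Rop a) = a;
  D_mul : forall a b, Dop (mul a b) = Dop (mul a (Dop b));
  R_mul : forall a b, Rop (mul a b) = Rop (mul (Rop a) b);
  D_sandwich : forall a b, Dop (mul a b) = mul (mul (Dop a) (Dop (mul a b))) (Dop a);
  R_sandwich : forall a b, Rop (mul a b) = mul (mul (Rop b) (Rop (mul a b))) (Rop b);
  RD : forall a, Rop (Dop a) = Dop a;
  DR : forall a, Dop (Rop a) = Rop a
}.

Arguments mul {_} _ _.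
Arguments Dop {_} _.
Arguments Rop {_} _.

Section Defs.
Variable S : DRCSemigroup.

Definition is_proj (p : S) : Prop := exists a : S, p = Dop a.

Definition proj_le (p q : S) : Prop := p = mul p q /\ p = mul q p.

(* Theta_a = Theta_b as maps P -> P, p Theta_a = R(pa) *)
Definition Theta_eq (a b : S) : Prop :=
  forall p, is_proj p -> Rop (mul p a) = Rop (mul p b).

(* Delta_a = Delta_b as maps P -> P, p Delta_a = D(ap) *)
Definition Delta_eq (a b : S) : Prop :=
  forall p, is_proj p -> Dop (mul a p) = Dop (mul b p).

(* vartheta_a = vartheta_b: equal domains {p in P : p <= D(a)} and equal values *)
Definition vtheta_eq (a b : S) : Prop :=
  (forall p, is_proj p -> (proj_le p (Dop a) <-> proj_le p (Dop b))) /\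
  (forall p, is_proj p -> proj_le p (Dop a) -> Rop (mul p a) = Rop (mul p b)).

(* vartheta'_a = vartheta'_b: equal domains {p in P : p <= R(a)} and equal values *)
Definition vtheta'_eq (a b : S) : Prop :=
  (forall p, is_proj p -> (proj_le p (Rop a) <-> proj_le p (Rop b))) /\
  (forall p, is_proj p -> proj_le p (Rop a) -> Dop (mul a p) = Dop (mul b p)).

Definition is_congruence (sig : S -> S -> Prop) : Prop :=
  (forall a, sig a a) /\
  (forall a b, sig a b -> sig b a) /\
  (forall a b c, sig a b -> sig b c -> sig a c) /\
  (forall a b c, sig a b -> sig (mul c a) (mul c b)) /\
  (forall a b c, sig a b -> sig (mul a c) (mul b c)) /\
  (forall a b, sig a b -> sig (Dop a) (Dop b) /\ sig (Rop a) (Rop b)).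

Definition projection_separating (sig : S -> S -> Prop) : Prop :=
  forall p q, is_proj p -> is_proj q -> sig p q -> p = q.

Definition is_max_ps_congruence (sig : S -> S -> Prop) : Prop :=
  is_congruence sig /\ projection_separating sig /\
  (forall tau, is_congruence tau -> projection_separating tau ->
     forall a b, tau a b -> sig a b).

End Defs.

(* Main.v *)
Require Import Defs.

Lemma DD (S : DRCSemigroup) (x : S) : Dop (Dop x) = Dop x.
Proof. transitivity (Dop (Rop (Dop x))). rewrite RD; reflexivity. rewrite DR, RD; reflexivity. Qed.

Lemma proj_D (S : DRCSemigroup) (p : S) : is_proj S p -> Dop p = p.
Proof. intros [a ->]; apply DD. Qed.

Lemma R_proj (S : DRCSemigroup) (x : S) : is_proj S (Rop x).
Proof. exists (Rop x); symmetry; apply DR. Qed.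

Lemma D_proj (S : DRCSemigroup) (x : S) : is_proj S (Dop x).
Proof. exists x; reflexivity. Qed.

Lemma proj_idem (S : DRCSemigroup) (p : S) : is_proj S p -> mul p p = p.
Proof. intros H. pattern p at 1; rewrite <- (proj_D S p H); apply D_left_id. Qed.

Lemma sand_le (S : DRCSemigroup) (q r : S) : mul q q = q -> r = mul (mul q r) q -> proj_le S r q.
Proof.
  intros Hq H1. split.
  - assert (E : mul r q = r). { rewrite H1. rewrite mul_assoc, Hq. reflexivity. }
    symmetry; exact E.
  - assert (E : mul q r = r). { rewrite H1. rewrite <- !mul_assoc, Hq. reflexivity. }
    symmetry; exact E.
Qed.

Lemma D_le (S : DRCSemigroup) (x y : S) : proj_le S (Dop (mul x y)) (Dop x).
Proof. apply sand_le; [apply proj_idem, D_proj | apply D_sandwich]. Qed.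

Lemma R_le (S : DRCSemigroup) (x y : S) : proj_le S (Rop (mul x y)) (Rop y).
Proof. apply sand_le; [apply proj_idem, R_proj | apply R_sandwich]. Qed.

Lemma le_antisym (S : DRCSemigroup) (p q : S) : proj_le S p q -> proj_le S q p -> p = q.
Proof. intros [_ H1b] [H2a _]. rewrite H1b. rewrite <- H2a. reflexivity. Qed.

Lemma le_refl_D (S : DRCSemigroup) (x : S) : proj_le S (Dop x) (Dop x).
Proof. split; symmetry; apply proj_idem, D_proj. Qed.

Lemma le_refl_R (S : DRCSemigroup) (x : S) : proj_le S (Rop x) (Rop x).
Proof. split; symmetry; apply proj_idem, R_proj. Qed.

Lemma sigma_DR (S : DRCSemigroup) (a b : S) :
  Theta_eq S a b -> Delta_eq S a b -> Dop a = Dop b /\ Rop a = Rop b.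
Proof.
  intros HT HD. split.
  - assert (E1 : Dop a = Dop (mul b (Rop a))).
    { rewrite <- (HD (Rop a) (R_proj S a)). rewrite R_right_id. reflexivity. }
    assert (E2 : Dop b = Dop (mul a (Rop b))).
    { rewrite (HD (Rop b) (R_proj S b)). rewrite R_right_id. reflexivity. }
    apply le_antisym.
    + rewrite E1. apply D_le.
    + rewrite E2. apply D_le.
  - assert (F1 : Rop a = Rop (mul (Dop a) b)).
    { rewrite <- (HT (Dop a) (D_proj S a)). rewrite D_left_id. reflexivity. }
    assert (F2 : Rop b = Rop (mul (Dop b) a)).
    { rewrite (HT (Dop b) (D_proj S b)). rewrite D_left_id. reflexivity. }
    apply le_antisym.
    + rewrite F1. apply R_le.
    + rewrite F2. apply R_le.
Qed.

Theorem proposition8p17 (S : DRCSemigroup) :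
  is_max_ps_congruence S (fun a b : S => Theta_eq S a b /\ Delta_eq S a b) /\
  (forall a b : S,
     (Theta_eq S a b /\ Delta_eq S a b) <-> (vtheta_eq S a b /\ vtheta'_eq S a b)).
Proof.
  split.
  - split; [|split].
    + split; [|split; [|split; [|split; [|split]]]].
      * intros a; split; intros p _; reflexivity.
      * intros a b [H1 H2]; split; intros p Hp; symmetry; auto.
      * intros a b c [H1 H2] [H3 H4]; split; intros p Hp.
        -- rewrite (H1 p Hp); auto.
        -- rewrite (H2 p Hp); auto.
      * intros a b c [HT HD]; split; intros p Hp.
        -- rewrite <- !mul_assoc. rewrite (R_mul S (mul p c) a), (R_mul S (mul p c) b).
           apply HT, R_proj.
        -- rewrite !mul_assoc. rewrite (D_mul S c (mul a p)), (D_mul S c (mul b p)), (HD p Hp).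
           reflexivity.
      * intros a b c [HT HD]; split; intros p Hp.
        -- rewrite <- !mul_assoc. rewrite (R_mul S (mul p a) c), (R_mul S (mul p b) c), (HT p Hp).
           reflexivity.
        -- rewrite !mul_assoc. rewrite (D_mul S a (mul c p)), (D_mul S b (mul c p)).
           apply HD, D_proj.
      * intros a b [HT HD]. destruct (sigma_DR S a b HT HD) as [E1 E2].
        rewrite E1, E2. unfold Theta_eq, Delta_eq. split; split; intros; reflexivity.
    + intros p q Hp Hq [HT HD]. destruct (sigma_DR S p q HT HD) as [E1 _].
      rewrite <- (proj_D S p Hp), <- (proj_D S q Hq). exact E1.
    + intros tau Hc Hps a b Hab.
      destruct Hc as (Hr & Hs & Ht & Hl & Hrt & Hdr). split; intros p Hp.
      * apply Hps; [apply R_proj | apply R_proj |].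
        apply (proj2 (Hdr _ _ (Hl _ _ p Hab))).
      * apply Hps; [apply D_proj | apply D_proj |].
        apply (proj1 (Hdr _ _ (Hrt _ _ p Hab))).
  - intros a b; split.
    + intros [HT HD]. destruct (sigma_DR S a b HT HD) as [E1 E2].
      split; split.
      * intros p Hp; rewrite E1; tauto.
      * intros p Hp _; apply HT; auto.
      * intros p Hp; rewrite E2; tauto.
      * intros p Hp _; apply HD; auto.
    + intros [[Dom1 V1] [Dom2 V2]].
      assert (E1 : Dop a = Dop b).
      { apply le_antisym.
        - apply (proj1 (Dom1 _ (D_proj S a))), le_refl_D.
        - apply (proj2 (Dom1 _ (D_proj S b))), le_refl_D. }
      assert (E2 : Rop a = Rop b).
      { apply le_antisym.
        - apply (proj1 (Dom2 _ (R_proj S a))), le_refl_R.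
        - apply (proj2 (Dom2 _ (R_proj S b))), le_refl_R. }
      split; intros p Hp.
      * assert (Ha : Rop (mul p a) = Rop (mul (Rop (mul p (Dop a))) a)).
        { rewrite <- (R_mul S (mul p (Dop a)) a), mul_assoc, D_left_id. reflexivity. }
        assert (Hb : Rop (mul p b) = Rop (mul (Rop (mul p (Dop b))) b)).
        { rewrite <- (R_mul S (mul p (Dop b)) b), mul_assoc, D_left_id. reflexivity. }
        rewrite Ha, Hb, <- E1. apply V1.
        -- apply R_proj.
        -- pose proof (R_le S p (Dop a)) as L. rewrite RD in L. exact L.
      * assert (Ha : Dop (mul a p) = Dop (mul a (Dop (mul (Rop a) p)))).
        { rewrite <- (D_mul S a (mul (Rop a) p)), <- mul_assoc, R_right_id. reflexivity. }
        assert (Hb : Dop (mul b p) = Dop (mul b (Dop (mul (Rop b) p)))).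
        { rewrite <- (D_mul S b (mul (Rop b) p)), <- mul_assoc, R_right_id. reflexivity. }
        rewrite Ha, Hb, <- E2. apply V2.
        -- apply D_proj.
        -- pose proof (D_le S (Rop a) p) as L. rewrite DR in L. exact L.
Qed.
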